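(* Consider a discrete-time time-invariant closed-loop system $\mathbf{x}_{t+1}=f(\mathbf{x}_t,\pi(\mathbf{x}_t))$ with states constrained to $\mathcal{X}\subseteq\mathbb{R}^{n_x}$, and a target set $\mathcal{X}_T$. Let $\mathcal{P}_t$ ($t\le 0$) be the true backprojection sets and let integers $t_2<t_1\le 0$ be given, together with sets $\bar{\mathcal{P}}_t$ for $t_2\le t\le t_1-1$ satisfying $\mathcal{P}_t\subseteq\bar{\mathcal{P}}_t$ (BP over-approximations). If $\bar{\mathcal{P}}_{t_2}\subseteq\mathcal{P}_{t_1}$, then the set $$\mathcal{I}=\mathcal{P}_{t_1}\cup\bigcup_{t=t_2}^{t_1-1}\bar{\mathcal{P}}_t$$ contains all BP sets for $t\le t_1$, i.e. $\mathcal{P}_t\subseteq\mathcal{I}$ for all $t\le t_1$.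
   Context: True backprojection sets: $\mathcal{P}_0=\mathcal{X}_T$ and, for $t<0$, $\mathcal{P}_t=\{\mathbf{x}\in\mathcal{X}\mid f(\mathbf{x},\pi(\mathbf{x}))\in\mathcal{P}_{t+1}\}$, i.e. the set of states from which the closed-loop system reaches $\mathcal{X}_T$ at time $0$. *)

(* Defs.v *)
From mathcomp Require Import all_boot all_order all_algebra.
From mathcomp Require Import boolp classical_sets reals.
Set Implicit Arguments. Unset Strict Implicit. Unset Printing Implicit Defensive.
Import Order.TTheory GRing.Theory Num.Theory.
Local Open Scope classical_set_scope.
Local Open Scope ring_scope.

(* backproj_nat k = P_{-k}:  P_0 = XT,  P_{-(k+1)} = {x in X | f x (pi x) \in P_{-k}} *)
Fixpoint backproj_nat {R : realType} {nx nu : nat}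
  (f : 'rV[R]_nx -> 'rV[R]_nu -> 'rV[R]_nx) (pi : 'rV[R]_nx -> 'rV[R]_nu)
  (X XT : set 'rV[R]_nx) (k : nat) : set 'rV[R]_nx :=
  match k with
  | 0%N => XT
  | k'.+1 => [set x | X x /\ backproj_nat f pi X XT k' (f x (pi x))]
  end.

(* True backprojection set P_t for an integer time t <= 0 (indexed by |t|;
   only used for t <= 0). *)
Definition backproj {R : realType} {nx nu : nat}
  (f : 'rV[R]_nx -> 'rV[R]_nu -> 'rV[R]_nx) (pi : 'rV[R]_nx -> 'rV[R]_nu)
  (X XT : set 'rV[R]_nx) (t : int) : set 'rV[R]_nx :=
  backproj_nat f pi X XT `|t|%N.

(* Main.v *)
Require Import Defs.
From mathcomp Require Import all_boot all_order all_algebra.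
From mathcomp Require Import boolp classical_sets reals.
From mathcomp Require Import zify.
Import Order.TTheory GRing.Theory Num.Theory.
Local Open Scope classical_set_scope.
Local Open Scope ring_scope.

Lemma shift_incl (R : realType) (nx nu : nat)
  (f : 'rV[R]_nx -> 'rV[R]_nu -> 'rV[R]_nx) (pi : 'rV[R]_nx -> 'rV[R]_nu)
  (X XT : set 'rV[R]_nx) (a b : nat) :
  backproj_nat f pi X XT b `<=` backproj_nat f pi X XT a ->
  forall j, backproj_nat f pi X XT (b + j) `<=` backproj_nat f pi X XT (a + j).
Proof.
move=> H; elim=> [|j IH]; first by rewrite !addn0.
rewrite !addnS /= => x [Xx Px]; split=> //; exact: IH.
Qed.

Lemma nat_main (R : realType) (nx nu : nat)
  (f : 'rV[R]_nx -> 'rV[R]_nu -> 'rV[R]_nx) (pi : 'rV[R]_nx -> 'rV[R]_nu)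
  (X XT : set 'rV[R]_nx) (a b : nat) :
  (a < b)%N -> backproj_nat f pi X XT b `<=` backproj_nat f pi X XT a ->
  forall n k x, (k <= n)%N -> (a <= k)%N -> backproj_nat f pi X XT k x ->
  backproj_nat f pi X XT a x \/
  exists k', [/\ (a < k')%N, (k' <= b)%N & backproj_nat f pi X XT k' x].
Proof.
move=> ab H; elim=> [|n IH] k x kn ak Pk.
  by left; have -> : a = k by lia.
case: (leqP k b) => kb.
  case: (ltngtP a k) => [lt|gt|eq]; last by left; rewrite eq.
  - by right; exists k.
  - lia.
have Pk' : backproj_nat f pi X XT (b + (k - b)) x by rewrite subnKC // ltnW.
have Pa := @shift_incl _ _ _ _ _ _ _ _ _ H _ _ Pk'.
apply: (IH (a + (k - b))%N) => //; lia.
Qed.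

Theorem mainTheorem2 (R : realType) (nx nu : nat)
  (f : 'rV[R]_nx -> 'rV[R]_nu -> 'rV[R]_nx) (pi : 'rV[R]_nx -> 'rV[R]_nu)
  (X XT : set 'rV[R]_nx) (t1 t2 : int) (Pbar : int -> set 'rV[R]_nx) :
  t2 < t1 -> t1 <= 0 ->
  (forall t : int, t2 <= t -> t <= t1 - 1 -> backproj f pi X XT t `<=` Pbar t) ->
  Pbar t2 `<=` backproj f pi X XT t1 ->
  forall t : int, t <= t1 ->
    backproj f pi X XT t `<=`
      (backproj f pi X XT t1 `|`
        [set x | exists t' : int, [/\ t2 <= t', t' <= t1 - 1 & Pbar t' x]]).
Proof.
move=> t21 t10 Hov Hb t tt1 x Px.
rewrite /backproj in Hov Hb Px *.
have ab : (`|t1| < `|t2|)%N by lia.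
have Hbb : backproj_nat f pi X XT `|t2| `<=` backproj_nat f pi X XT `|t1|.
  move=> y Py; apply: Hb; apply: (Hov t2) => //; lia.
have := @nat_main _ _ _ f pi X XT _ _ ab Hbb `|t|%N `|t|%N x (leqnn _) _ Px.
case=> [|Ha|[k' [k1 k2 Pk]]]; first lia.
  by left.
right; exists (- (k'%:Z)); split; [lia|lia|].
apply: (Hov (- (k'%:Z))); [lia|lia|].
by have -> : `|- k'%:Z|%N = k' by lia.
Qed.
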